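(* Let $L>0$, $H\in(0,\infty]$, $D\ge1$, and let $v_1,\dots,v_{D+1}\in\mathbb R^m$ be orthonormal. With $\ell=\min\{L,\ H/(10(D+1)^{1.5})\}$, $\eta=10(D+1)^{1.5}\ell$, $\tilde f(x)=\max_{1\le r\le D+1}(\ell v_r^\top x-5\ell^2(r-1)/\eta)$ and $f(x)=\inf_y\{\tilde f(y)+\frac\eta2\|y-x\|^2\}$, every $x\in\mathbb R^m$ with $|v_{D+1}^\top x|\le\ell/\eta$ satisfies \[f(x)-\min_{\|x'\|\le1}f(x')\ \ge\ \min\Big\{\frac{L}{2\sqrt{D+1}},\ \frac{H}{20(D+1)^2}\Big\}.\] *)

(* Defs.v *)
From Stdlib Require Import Reals Lra ClassicalEpsilon.
Open Scope R_scope.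

(* Vectors of R^m are represented as functions nat -> R; only the
   coordinates 0..m-1 are ever used. *)
Fixpoint sumR (m : nat) (g : nat -> R) : R :=
  match m with
  | O => 0
  | S k => sumR k g + g k
  end.

Definition dot (m : nat) (a b : nat -> R) : R := sumR m (fun i => a i * b i).
Definition sqnorm (m : nat) (a : nat -> R) : R := dot m a a.
Definition norm (m : nat) (a : nat -> R) : R := sqrt (sqnorm m a).

Definition orthonormal (m D : nat) (v : nat -> nat -> R) : Prop :=
  forall r s, (1 <= r <= D + 1)%nat -> (1 <= s <= D + 1)%nat ->
    dot m (v r) (v s) = if Nat.eq_dec r s then 1 else 0.

Definition is_glb (E : R -> Prop) (a : R) : Prop :=
  (forall s, E s -> a <= s) /\ (forall b, (forall s, E s -> b <= s) -> b <= a).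

(* The infimum (chosen classically; meaningful when the glb exists). *)
Definition Rinf (E : R -> Prop) : R :=
  epsilon (inhabits 0) (fun a => is_glb E a).

(* Parameters. H = None encodes H = +infinity. *)
Definition pow15 (x : R) : R := Rpower x (3/2).

Definition ell (L : R) (H : option R) (D : nat) : R :=
  match H with
  | Some h => Rmin L (h / (10 * pow15 (INR (D + 1))))
  | None => L
  end.

Definition eta (L : R) (H : option R) (D : nat) : R :=
  10 * pow15 (INR (D + 1)) * ell L H D.

(* max over r = 1..D+1 of g r *)
Fixpoint maxR_from1 (n : nat) (g : nat -> R) : R :=
  match n with
  | O => g 1%nat
  | S k => Rmax (maxR_from1 k g) (g (S (S k)))
  end.

Definition ftilde (m D : nat) (L : R) (H : option R) (v : nat -> nat -> R)
  (x : nat -> R) : R :=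
  let l := ell L H D in
  let e := eta L H D in
  maxR_from1 D (fun r => l * dot m (v r) x - 5 * l ^ 2 * INR (r - 1) / e).

Definition fenv (m D : nat) (L : R) (H : option R) (v : nat -> nat -> R)
  (x : nat -> R) : R :=
  Rinf (fun t => exists y : nat -> R,
          t = ftilde m D L H v y
              + eta L H D / 2 * sqnorm m (fun i => y i - x i)).

Definition fmin_ball (m D : nat) (L : R) (H : option R) (v : nat -> nat -> R) : R :=
  Rinf (fun t => exists x' : nat -> R, norm m x' <= 1 /\ t = fenv m D L H v x').

Definition lower_bound (L : R) (H : option R) (D : nat) : R :=
  match H with
  | Some h => Rmin (L / (2 * sqrt (INR (D + 1)))) (h / (20 * INR (D + 1) ^ 2))
  | None => L / (2 * sqrt (INR (D + 1)))
  end.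

(* Main.v *)
Require Import Defs.
From Stdlib Require Import Reals Lra Lia ClassicalEpsilon.
Open Scope R_scope.

Lemma sumR_ext m f g : (forall i, f i = g i) -> sumR m f = sumR m g.
Proof. intros Hf; induction m; simpl; [lra| rewrite IHm, Hf; lra]. Qed.

Lemma sumR_plus m f g : sumR m (fun i => f i + g i) = sumR m f + sumR m g.
Proof. induction m; simpl; [lra| rewrite IHm; lra]. Qed.

Lemma sumR_scal m c f : sumR m (fun i => c * f i) = c * sumR m f.
Proof. induction m; simpl; [lra| rewrite IHm; lra]. Qed.

Lemma sumR_le m f g : (forall i, f i <= g i) -> sumR m f <= sumR m g.
Proof. intros Hf; induction m; simpl; [lra| specialize (Hf m); lra]. Qed.

Lemma sumR_const1 n : sumR n (fun _ => 1) = INR n.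
Proof. induction n; simpl sumR; [simpl; lra| rewrite IHn, S_INR; lra]. Qed.

Lemma sumR_swap m n F :
  sumR m (fun i => sumR n (fun k => F i k)) = sumR n (fun k => sumR m (fun i => F i k)).
Proof.
  induction m; simpl.
  - induction n; simpl; lra.
  - rewrite IHm, <- sumR_plus. reflexivity.
Qed.

Lemma sumR_delta0 n r : (n < r)%nat ->
  sumR n (fun k => if Nat.eq_dec r (S k) then 1 else 0) = 0.
Proof.
  induction n; intros Hr; simpl; [lra|].
  rewrite IHn by lia. destruct (Nat.eq_dec r (S n)); [lia|lra].
Qed.

Lemma sumR_delta n r : (1 <= r <= n)%nat ->
  sumR n (fun k => if Nat.eq_dec r (S k) then 1 else 0) = 1.
Proof.
  induction n; intros Hr; [lia|]. simpl.
  destruct (Nat.eq_dec r (S n)).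
  - rewrite sumR_delta0 by lia. lra.
  - rewrite IHn by lia. lra.
Qed.

Lemma dot_sym m a b : dot m a b = dot m b a.
Proof. unfold dot; apply sumR_ext; intros; ring. Qed.

Lemma dot_sub m a y z : dot m a (fun i => y i - z i) = dot m a y - dot m a z.
Proof.
  unfold dot. rewrite (sumR_ext m _ (fun i => a i * y i + (-1) * (a i * z i))) by (intros; ring).
  rewrite sumR_plus, sumR_scal. ring.
Qed.

Lemma quad_lb m e l v w : 0 < e ->
  e / 2 * sqnorm m w + l * dot m v w >= - (l ^ 2 / (2 * e)) * sqnorm m v.
Proof.
  intros He. unfold sqnorm, dot.
  rewrite <- !sumR_scal, <- sumR_plus.
  apply Rle_ge, sumR_le. intros i.
  assert (0 <= e / 2 * (w i + l / e * v i) ^ 2).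
  { apply Rmult_le_pos; [lra| apply pow2_ge_0]. }
  assert (e / 2 * (w i + l / e * v i) ^ 2 =
     e / 2 * (w i * w i) + l * (v i * w i) + (l ^ 2 / (2 * e)) * (v i * v i)) by (field; lra).
  lra.
Qed.

Lemma dot_lb m v x : sqnorm m v = 1 -> sqnorm m x <= 1 -> dot m v x >= -1.
Proof.
  intros Hv Hx. unfold sqnorm, dot in *.
  assert (sumR m (fun i => -(1/2) * (v i * v i) + -(1/2) * (x i * x i)) <= sumR m (fun i => v i * x i)).
  { apply sumR_le. intros i. pose proof (pow2_ge_0 (v i + x i)). nra. }
  rewrite sumR_plus, !sumR_scal in H. lra.
Qed.

Lemma maxR_ub n g M : (forall r, (1 <= r <= n + 1)%nat -> g r <= M) -> maxR_from1 n g <= M.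
Proof.
  induction n; intros Hg; simpl.
  - apply Hg; lia.
  - apply Rmax_lub; [apply IHn; intros; apply Hg; lia | apply Hg; lia].
Qed.

Lemma maxR_lb n g : g (n + 1)%nat <= maxR_from1 n g.
Proof.
  induction n; simpl.
  - lra.
  - eapply Rle_trans; [|apply Rmax_r]. replace (S (n + 1)) with (S (S n)) by lia. lra.
Qed.

Lemma glb_ex E : (exists s, E s) -> (exists b, forall s, E s -> b <= s) -> is_glb E (Rinf E).
Proof.
  intros [s Hs] [b Hb]. unfold Rinf. apply epsilon_spec.
  destruct (completeness (fun x => E (- x))) as [M [HM1 HM2]].
  - exists (- b). intros x Hx. specialize (Hb _ Hx). lra.
  - exists (- s). now rewrite Ropp_involutive.
  - exists (- M). split.
    + intros t Ht. assert (t' : E (- - t)) by now rewrite Ropp_involutive.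
      specialize (HM1 _ t'). lra.
    + intros c Hc. assert (M <= - c).
      { apply HM2. intros x Hx. specialize (Hc _ Hx). lra. }
      lra.
Qed.
Lemma sumR_ext_lt m f g : (forall i, (i < m)%nat -> f i = g i) -> sumR m f = sumR m g.
Proof. intros Hf; induction m; simpl; [lra|]. rewrite IHm by (intros; apply Hf; lia). rewrite Hf by lia; lra. Qed.

Lemma dot_V m D v r : orthonormal m D v -> (1 <= r <= D + 1)%nat ->
  dot m (v r) (fun i => sumR (D + 1) (fun k => v (S k) i)) = 1.
Proof.
  intros hv Hr. unfold dot.
  rewrite (sumR_ext m _ (fun i => sumR (D+1) (fun k => v r i * v (S k) i)))
    by (intros; now rewrite sumR_scal).
  rewrite sumR_swap.
  rewrite (sumR_ext_lt (D+1) _ (fun k => if Nat.eq_dec r (S k) then 1 else 0)).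
  - apply sumR_delta; lia.
  - intros k Hk. apply hv; lia.
Qed.

Lemma dot_VV m D v : orthonormal m D v ->
  dot m (fun i => sumR (D + 1) (fun k => v (S k) i)) (fun i => sumR (D + 1) (fun k => v (S k) i)) = INR (D + 1).
Proof.
  intros hv. unfold dot at 1.
  rewrite (sumR_ext m _ (fun i => sumR (D+1) (fun k => sumR (D + 1) (fun k => v (S k) i) * v (S k) i)))
    by (intros; rewrite <- sumR_scal; apply sumR_ext; intros; ring).
  rewrite sumR_swap, <- sumR_const1.
  apply sumR_ext_lt. intros k Hk. fold (dot m (fun i => sumR (D + 1) (fun k => v (S k) i)) (v (S k))).
  rewrite dot_sym. apply dot_V; [exact hv| lia].
Qed.

Theorem lemma5 (m D : nat) (L : R) (H : option R) (v : nat -> nat -> R)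
  (hL : 0 < L) (hH : forall h, H = Some h -> 0 < h) (hD : (1 <= D)%nat)
  (hv : orthonormal m D v) :
  forall x : nat -> R,
    Rabs (dot m (v (D + 1)%nat) x) <= ell L H D / eta L H D ->
    fenv m D L H v x - fmin_ball m D L H v >= lower_bound L H D.
Proof.
  intros x Hx.
  set (n := INR (D + 1)) in *.
  assert (Hn : 2 <= n).
  { unfold n. rewrite plus_INR. apply le_INR in hD. simpl in *. lra. }
  set (s := sqrt n).
  assert (Hs : 0 < s) by (apply sqrt_lt_R0; lra).
  assert (Hss : s * s = n) by (apply sqrt_sqrt; lra).
  assert (Hp : pow15 n = n * s).
  { unfold pow15. replace (3/2) with (1 + /2) by field.
    rewrite Rpower_plus, Rpower_1, Rpower_sqrt by lra. reflexivity. }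
  set (l := ell L H D) in *.
  assert (Hl : 0 < l).
  { unfold l, ell. destruct H as [h|]; [|lra].
    specialize (hH h eq_refl). fold n. rewrite Hp. apply Rmin_glb_lt; [lra|].
    apply Rdiv_lt_0_compat; [lra|]. nra. }
  set (e := eta L H D) in *.
  assert (He : e = 10 * (n * s) * l) by (unfold e, eta; fold n l; now rewrite Hp).
  assert (Hns : 0 < n * s) by nra.
  assert (Hepos : 0 < e) by (rewrite He; nra).
  set (k := l / e) in *.
  assert (Hk : k * (10 * n * s) = 1) by (unfold k; rewrite He; field; nra).
  assert (Hkpos : 0 < k) by (unfold k; apply Rdiv_lt_0_compat; lra).
  assert (Hv1 : sqnorm m (v (D + 1)%nat) = 1).
  { unfold sqnorm. rewrite hv by lia. destruct (Nat.eq_dec _ _); [reflexivity|lia]. }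
  assert (Hft : forall y, ftilde m D L H v y >= l * dot m (v (D+1)%nat) y - 5 * l ^ 2 * INR D / e).
  { intros y. unfold ftilde. fold l e.
    pose proof (maxR_lb D (fun r => l * dot m (v r) y - 5 * l ^ 2 * INR (r - 1) / e)) as HM.
    cbv beta in HM. replace (D + 1 - 1)%nat with D in HM by lia. lra. }
  assert (Henv : forall y z, ftilde m D L H v y + e / 2 * sqnorm m (fun i => y i - z i)
      >= l * dot m (v (D+1)%nat) z - l ^ 2 / (2 * e) - 5 * l ^ 2 * INR D / e).
  { intros y z. pose proof (Hft y). pose proof (dot_sub m (v (D+1)%nat) y z).
    pose proof (quad_lb m e l (v (D+1)%nat) (fun i => y i - z i) Hepos).
    rewrite Hv1 in H2. rewrite H1 in H2. lra. }
  assert (Gf : forall z, is_glb (fun t => exists y : nat -> R,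
          t = ftilde m D L H v y + eta L H D / 2 * sqnorm m (fun i => y i - z i)) (fenv m D L H v z)).
  { intros z. apply glb_ex.
    - eexists; exists z; reflexivity.
    - eexists. intros t [y ->]. fold e. apply Rge_le, Henv. }
  assert (Hfx : fenv m D L H v x >= l * dot m (v (D+1)%nat) x - l ^ 2 / (2 * e) - 5 * l ^ 2 * INR D / e).
  { apply Rle_ge. apply (proj2 (Gf x)). intros t [y ->]. fold e. apply Rge_le, Henv. }
  set (c := - / s).
  set (V := fun i => sumR (D + 1) (fun k => v (S k) i)).
  set (x0 := fun i => c * V i).
  assert (Hx0n : norm m x0 <= 1).
  { unfold norm, sqnorm, dot, x0.
    rewrite (sumR_ext m _ (fun i => (c * c) * (V i * V i))) by (intros; ring).
    rewrite sumR_scal. fold (dot m V V). unfold V. rewrite dot_VV by exact hv. fold n.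
    replace (c * c * n) with 1. { rewrite sqrt_1; lra. }
    unfold c. rewrite <- Hss. field. lra. }
  assert (Hft0 : ftilde m D L H v x0 <= - l / s).
  { unfold ftilde. fold l e. apply maxR_ub. intros r Hr.
    assert (dot m (v r) x0 = c).
    { unfold x0, dot. rewrite (sumR_ext m _ (fun i => c * (v r i * V i))) by (intros; ring).
      rewrite sumR_scal. fold (dot m (v r) V). unfold V. rewrite dot_V by assumption. ring. }
    rewrite H0. assert (0 <= 5 * l ^ 2 * INR (r - 1) / e).
    { apply Rmult_le_pos; [|left; apply Rinv_0_lt_compat; lra].
      apply Rmult_le_pos; [nra| apply pos_INR]. }
    unfold c. replace (- l / s) with (l * - / s) by (field; lra). lra. }
  assert (Hfx0 : fenv m D L H v x0 <= - l / s).
  { eapply Rle_trans; [apply (proj1 (Gf x0)); exists x0; reflexivity|].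
    unfold sqnorm, dot. rewrite (sumR_ext m _ (fun _ => 0 * 0)) by (intros; ring).
    rewrite (sumR_ext m _ (fun i => 0 * 1)) by (intros; ring). rewrite sumR_scal. lra. }
  assert (Gb : is_glb (fun t => exists x' : nat -> R, norm m x' <= 1 /\ t = fenv m D L H v x')
                 (fmin_ball m D L H v)).
  { apply glb_ex.
    - eexists; exists x0; split; [exact Hx0n| reflexivity].
    - exists (l * -1 - l ^ 2 / (2 * e) - 5 * l ^ 2 * INR D / e).
      intros t [x' [Hn' ->]].
      assert (sqnorm m x' <= 1).
      { unfold norm in Hn'. destruct (Rle_or_lt (sqnorm m x') 1) as [?|Hlt]; [assumption|].
        assert (sqrt 1 < sqrt (sqnorm m x')) by (apply sqrt_lt_1_alt; lra). rewrite sqrt_1 in *; lra. }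
      pose proof (dot_lb m _ _ Hv1 H0).
      assert (Hfx' : fenv m D L H v x' >= l * dot m (v (D+1)%nat) x' - l ^ 2 / (2 * e) - 5 * l ^ 2 * INR D / e).
      { apply Rle_ge. apply (proj2 (Gf x')). intros t [y ->]. fold e. apply Rge_le, Henv. }
      nra. }
  assert (Hmin : fmin_ball m D L H v <= - l / s).
  { eapply Rle_trans; [apply (proj1 Gb); exists x0; split; [exact Hx0n| reflexivity]| exact Hfx0]. }
  assert (Hlb : lower_bound L H D <= l / (2 * s)).
  { unfold lower_bound, l, ell. fold n s. destruct H as [h|]; [|lra].
    rewrite Hp. unfold Rmin at 2. destruct (Rle_dec L (h / (10 * (n * s)))).
    - apply Rmin_l.
    - eapply Rle_trans; [apply Rmin_r|]. right.
      replace (n ^ 2) with (n * (s * s)) by (rewrite Hss; ring). field; lra. }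
  assert (Ht : l * dot m (v (D+1)%nat) x >= - l * k).
  { pose proof (Rle_abs (- dot m (v (D + 1)%nat) x)). rewrite Rabs_Ropp in H0. nra. }
  assert (HINR : INR D = n - 1) by (unfold n; rewrite plus_INR; simpl; ring).
  assert (Hlk : l ^ 2 / (2 * e) = l * k / 2) by (unfold k; field; lra).
  assert (Hlk2 : 5 * l ^ 2 * INR D / e = 5 * l * k * (n - 1)) by (unfold k; rewrite HINR; field; lra).
  assert (Hls : l / s = 10 * n * l * k).
  { replace (l / s) with (l * (k * (10 * n * s)) / s) by (rewrite Hk; field; lra). field; lra. }
  assert (Hls2 : l / (2 * s) = 5 * n * l * k) by (replace (l / (2 * s)) with (l / s / 2) by (field; lra); lra).
  rewrite Hlk, Hlk2 in Hfx. replace (- l / s) with (- (l / s)) in Hmin by (field; lra). rewrite Hls in Hmin. rewrite Hls2 in Hlb.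
  assert (0 < l * k) by nra.
  nra.
Qed.
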